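(* Let $m$ be a positive integer, $b\in\mathbb{F}_{2^{2m}}$, and let $\gamma$ be a primitive element of $\mathbb{F}_{2^{2m}}$. Put $t=\frac{2^{2m}-1}{3}$. Then $g(x)=x^{t+1}+bx$ is a permutation polynomial of $\mathbb{F}_{2^{2m}}$ if and only if \[ b\neq \frac{\gamma^{t i'}\left(\gamma^{3(k-k')+\frac{2^{2m}+2}{3}(i-i')}+1\right)}{\gamma^{3(k-k')+i-i'}+1}\quad\text{and}\quad b\neq\gamma^{ts} \] for all integers $i,i'$ with $0\le i,i'\le 2$, $i\neq i'$, all $s$ with $0\le s\le 2$, and all $k,k'$ with $1\le k,k'\le t$.
   Context: A polynomial is a permutation polynomial of a finite field if it induces a bijection of that field. Note $3\mid 2^{2m}-1$, so $t$ is an integer. *)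

(* Defs.v *)
From HB Require Import structures.
From mathcomp Require Import all_boot all_order all_algebra all_field.
Set Implicit Arguments. Unset Strict Implicit. Unset Printing Implicit Defensive.
Import Order.TTheory GRing.Theory Num.Theory.

Definition tt (m : nat) : nat := (2 ^ (2 * m) - 1) %/ 3.

Definition excl (F : fieldType) (m : nat) (gamma : F) (i i' k k' : nat) : F :=
  (gamma ^+ (tt m * i') *
   (gamma ^ (3%:Z * (k%:Z - k'%:Z) + ((2 ^ (2 * m) + 2) %/ 3)%:Z * (i%:Z - i'%:Z))%R + 1)
   / (gamma ^ (3%:Z * (k%:Z - k'%:Z) + (i%:Z - i'%:Z))%R + 1))%R.

(* Main.v *)
Require Import Defs.
From HB Require Import structures.
From mathcomp Require Import all_boot all_order all_algebra all_field.
Set Warnings "-notation-overridden -ambiguous-paths".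
From mathcomp Require Import zify ring lra.
Import GRing.Theory.
Local Open Scope ring_scope.


Lemma four_mod m : (4 ^ m %% 3 = 1)%N.
Proof. by rewrite -modnXm /= exp1n. Qed.

Lemma tt_eq m : (2 ^ (2 * m) = 3 * tt m + 1)%N.
Proof.
rewrite /tt expnM /=.
have := four_mod m; have : (0 < 4 ^ m)%N by rewrite expn_gt0.
move: (4 ^ m)%N => q q0 qm.
lia.
Qed.

Lemma tt2 m : ((2 ^ (2 * m) + 2) %/ 3 = (tt m).+1)%N.
Proof.
rewrite tt_eq.
have -> : (3 * tt m + 1 + 2 = (tt m).+1 * 3)%N by lia.
by rewrite mulnK.
Qed.

Lemma excl_eq (F : fieldType) m (g : F) i i' k k' : g != 0 ->
  excl m g i i' k k' =
  (g ^+ (i + 3 * k) * g ^+ (tt m * i) + g ^+ (i' + 3 * k') * g ^+ (tt m * i'))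
  / (g ^+ (i + 3 * k) + g ^+ (i' + 3 * k')).
Proof.
move=> g0; rewrite /excl tt2.
set t := tt m.
have -> : (3%:Z * (k%:Z - k'%:Z) + (t.+1)%:Z * (i%:Z - i'%:Z))%R
   = (((i + 3 * k) + t * i)%N%:Z + (- ((i' + 3 * k') + t * i')%N%:Z))%R by lia.
have -> : (3%:Z * (k%:Z - k'%:Z) + (i%:Z - i'%:Z))%R
   = ((i + 3 * k)%N%:Z + (- (i' + 3 * k')%N%:Z))%R by lia.
have pz : forall n : nat, g ^ (n%:Z) = g ^+ n by [].
rewrite !expfzDr // -!invr_expz !pz.
set A := g ^+ (i + 3 * k); set C := g ^+ (i' + 3 * k').
set T := g ^+ (t * i); set T' := g ^+ (t * i').
rewrite (exprD _ (i + 3 * k)) (exprD _ (i' + 3 * k')) -/A -/C -/T -/T'.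
have A0 : A != 0 by rewrite expf_neq0.
have C0 : C != 0 by rewrite expf_neq0.
have T'0 : T' != 0 by rewrite expf_neq0.
have [AC|AC] := eqVneq (A + C) 0.
  have -> : A * C^-1 + 1 = (A + C) / C by field.
  by rewrite AC !mul0r !invr0 !mulr0.
have h : A * C^-1 + 1 != 0.
  apply: contra AC => /eqP h; apply/eqP.
  have -> : A + C = (A * C^-1 + 1) * C by field.
  by rewrite h mul0r.
by field; rewrite AC C0 T'0.
Qed.

Theorem proposition3 (F : finFieldType) (m : nat) (b gamma : F) :
  (0 < m)%N ->
  #|F| = (2 ^ (2 * m))%N ->
  (#|F|.-1).-primitive_root gamma ->
  bijective (fun x : F => x ^+ (tt m).+1 + b * x) <->
  ((forall i i' k k' : nat,
      (i <= 2)%N -> (i' <= 2)%N -> i != i' ->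
      (1 <= k <= tt m)%N -> (1 <= k' <= tt m)%N ->
      b != excl m gamma i i' k k') /\
   (forall s : nat, (s <= 2)%N -> b != gamma ^+ (tt m * s))).
Proof.
move=> m0 cardF prim.
set t := tt m.
have hn : (#|F|.-1 = 3 * t)%N by rewrite cardF tt_eq addn1.
rewrite hn in prim.
have c2 : (2 \in [pchar F])%N by apply: (card_finPcharP cardF).
have two : forall z : F, z + z = 0 by move=> z; apply: addrr_pchar2.
have ceq : forall u v : F, (u + v == 0) = (u == v).
  by move=> u v; rewrite addr_eq0 oppr_pchar2.
have g0 : gamma != 0.
  apply/negP => /eqP g0; move: (prim_expr_order prim); rewrite g0 expr0n.
  have -> : (3 * t == 0)%N = false.
    apply/negP => /eqP h3; have := prim_order_gt0 prim; by rewrite h3.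
  by move/eqP; rewrite eq_sym oner_eq0.
have g3t : gamma ^+ (3 * t) = 1 := prim_expr_order prim.
have powt : forall j, (gamma ^+ j) ^+ t = gamma ^+ (t * (j %% 3)).
  move=> j; rewrite -exprM {1}(div.divn_eq j 3) mulnDl exprD mulnC.
  have -> : (t * (j %/ 3 * 3) = (3 * t) * (j %/ 3))%N by lia.
  by rewrite exprM g3t expr1n mul1r mulnC.
have rep : forall z : F, z != 0 -> exists2 j, (j < 3 * t)%N & z = gamma ^+ j.
  move=> z z0.
  have zn : z ^+ (3 * t) = 1.
    rewrite -hn; apply: (mulfI z0); rewrite mulr1 -exprS prednK ?expf_card //.
    by rewrite cardF expn_gt0.
  case: (prim_rootP prim zn) => j ->.
  by exists j; rewrite ?ltn_ord.
have fE : forall z : F, z ^+ t.+1 + b * z = z * (z ^+ t + b).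
  by move=> z; rewrite exprS mulrDr [b * z]mulrC.
have f0 : (forall s : nat, (s <= 2)%N -> b != gamma ^+ (t * s)) ->
    forall z : F, z ^+ t.+1 + b * z = 0 -> z = 0.
  move=> H2 z; rewrite fE => /eqP; rewrite mulf_eq0 => /orP[/eqP //|].
  have [z0|z0] := eqVneq z 0; first by [].
  have [j _ ->] := rep z z0; rewrite powt ceq eq_sym => hb.
  by move: (H2 (j %% 3)%N); rewrite hb => /(_ _)/negP; rewrite -ltnS ltn_mod => /(_ isT).
split.
- move/bij_inj => Hinj; split.
  + move=> i i' k k' hi hi' hne hk hk'; apply/eqP => hb.
    rewrite excl_eq // in hb.
    set x := gamma ^+ (i + 3 * k) in hb; set y := gamma ^+ (i' + 3 * k') in hb.
    have hxy : x != y.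
      rewrite /x /y (eq_prim_root_expr prim); apply/negP => /eqP h.
      have : ((i + 3 * k) %% 3 = (i' + 3 * k') %% 3)%N.
        by rewrite -(modn_dvdm _ (dvdn_mulr t (dvdnn 3))) h modn_dvdm ?dvdn_mulr.
      move: hne; rewrite eqn_leq negb_and -!ltnNge; lia.
    have xyn : x + y != 0 by rewrite ceq.
    have mi : forall j, (j <= 2)%N -> ((j + 3 * k) %% 3 = j)%N by move=> j hj; lia.
    have mi' : forall j, (j <= 2)%N -> ((j + 3 * k') %% 3 = j)%N by move=> j hj; lia.
    apply: (negP hxy); apply/eqP; apply: Hinj => /=.
    rewrite !fE /x /y !powt mi // mi' // -/x -/y.
    apply/eqP; rewrite -ceq.
    have -> : x * (gamma ^+ (t * i) + b) + y * (gamma ^+ (t * i') + b)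
      = (x * gamma ^+ (t * i) + y * gamma ^+ (t * i')) + b * (x + y) by ring.
    rewrite hb mulrAC -mulrA divff // mulr1 two //.
  + move=> s hs; apply/eqP => hb.
    have gs0 : gamma ^+ s != 0 by rewrite expf_neq0.
    apply: (negP gs0); apply/eqP; apply: Hinj => /=.
    by rewrite fE -exprM mulnC -hb two mulr0 exprS !mul0r mulr0 addr0.
- move=> [H1 H2]; apply: injF_bij => x y /= hf.
  have f0' := f0 H2.
  have [x0|x0] := eqVneq x 0.
    by rewrite x0; apply/esym/f0'; rewrite -hf x0 expr0n mulr0 addr0.
  have [y0|y0] := eqVneq y 0.
    by rewrite y0; apply/f0'; rewrite hf y0 expr0n mulr0 addr0.
  apply/eqP; apply: contraT => hne.
  move: hf hne; have [a ha ->] := rep x x0; have [c hc ->] := rep y y0 => hf hne.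
  rewrite !fE !powt in hf.
  set X := gamma ^+ a in hf hne *; set Y := gamma ^+ c in hf hne *.
  have hxy : X + Y != 0 by rewrite ceq.
  have [ei|ei] := eqVneq (a %% 3)%N (c %% 3)%N.
    rewrite ei in hf.
    have hT : gamma ^+ (t * (c %% 3)) + b != 0.
      rewrite ceq eq_sym; apply: H2; lia.
    by move: hne; rewrite (mulIf hT hf) eqxx.
  have := H1 (a %% 3)%N (c %% 3)%N (a %/ 3).+1 (c %/ 3).+1.
  rewrite excl_eq //.
  have -> : ((a %% 3) + 3 * (a %/ 3).+1 = a + 3)%N by lia.
  have -> : ((c %% 3) + 3 * (c %/ 3).+1 = c + 3)%N by lia.
  rewrite !exprD -/X -/Y.
  set T := gamma ^+ (t * (a %% 3)); set T' := gamma ^+ (t * (c %% 3)).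
  have e : X * T + Y * T' = b * (X + Y).
    apply/eqP; rewrite -ceq.
    have -> : X * T + Y * T' + b * (X + Y) = X * (T + b) + Y * (T' + b) by ring.
    by rewrite hf two.
  have g30 : gamma ^+ 3 != 0 by rewrite expf_neq0.
  have -> : X * gamma ^+ 3 * T + Y * gamma ^+ 3 * T' = gamma ^+ 3 * (b * (X + Y)).
    by rewrite -e; ring.
  have -> : X * gamma ^+ 3 + Y * gamma ^+ 3 = gamma ^+ 3 * (X + Y) by ring.
  have -> : gamma ^+ 3 * (b * (X + Y)) / (gamma ^+ 3 * (X + Y)) = b.
    by field; rewrite ?hxy ?g30 ?expf_neq0.
  rewrite eqxx => /(_ _ _ ei _ _) H; apply: H; lia.
Qed.
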